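(* Let $n\ge1$, $0<T\le\infty$, $a\in\mathbb{R}$, and let $0\le u_0\in C(\mathbb{R}^n)$ with $u_0\not\equiv0$. If $0\le\mu\in\mathcal{Z}_{T,a}$ satisfies $$\mu(x,t)\ge u_0(x)+\int_0^t\mathcal{B}\mu(x,\tau)\,d\tau\qquad\text{on }Q_T,$$ then for every $\delta>1$ and $0<t_0<T$ there is a constant $C_0=C_0(\delta,t_0,u_0)>0$ such that $$\int_0^{t_0}\mathcal{B}\mu(x,\tau)\,d\tau\ge C_0e^{-\delta|x|}\qquad(x\in\mathbb{R}^n).$$ In particular, if $0<p<1$, $V\ge0$ is continuous, $u$ is an s-supersolution of $\partial_tu-\Delta\partial_tu=\Delta u+Vu^p$, $u(\cdot,0)=u_0$, on $Q_T$ and $\mu=e^tu$, then $$\mu(x,t_0)\ge u_0(x)+\int_0^{t_0}\mathcal{B}\mu\,d\tau+\int_0^{t_0}e^{(1-p)\tau}\mathcal{B}[V\mu^p]\,d\tau\ge C_0e^{-\delta|x|}\qquad(x\in\mathbb{R}^n).$$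
   Context: $\mathcal{B}\varphi=B*\varphi$, $B=\mathcal{F}^{-1}((1+|\xi|^2)^{-1})$. $BC_a$: continuous functions with $|\varphi(x)|\le C|x|^a$ for large $|x|$; $\mathcal{Z}_{T,a}=C([0,T);BC_a)$, $Q_T=\mathbb{R}^n\times[0,T)$. $u$ is an s-supersolution on $Q_T$ if $\mu=e^tu\in\mathcal{Z}_{T,a}$ and $\mu(t)\ge u_0+\int_0^t\mathcal{B}\mu\,d\tau+\int_0^te^{(1-p)\tau}\mathcal{B}[V\mu^p]\,d\tau$ on $Q_T$. *)

(* Defs.v *)
From HB Require Import structures.
From mathcomp Require Import all_boot all_order all_algebra.
From mathcomp Require Import all_classical all_reals all_analysis.
Set Implicit Arguments. Unset Strict Implicit. Unset Printing Implicit Defensive.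
Import Order.TTheory GRing.Theory Num.Theory.
Import numFieldNormedType.Exports.
Local Open Scope classical_set_scope.
Local Open Scope ring_scope.

Section Defs.
Variable R : realType.

Definition enorm (n : nat) (x : 'rV[R]_n) : R :=
  Num.sqrt (\sum_(i < n) x ord0 i ^+ 2).

(* Lebesgue integral over R^n of a function with values in \bar R,
   computed as iterated one-dimensional Lebesgue integrals (Tonelli);
   only used for nonnegative integrands. *)
Definition lint (g : R -> \bar R) : \bar R :=
  (\int[@lebesgue_measure R]_(s in [set: R]) g s)%E.

Fixpoint intRn (n : nat) : ('rV[R]_n -> \bar R) -> \bar R :=
  match n return ('rV[R]_n -> \bar R) -> \bar R with
  | 0 => fun f => f 0%R
  | m.+1 => fun f =>
      lint (fun s : R => intRn (fun (y : 'rV[R]_m) => f (row_mx (\row_(j < 1) s) y)))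
  end.

(* The Bessel kernel B = F^{-1}((1+|xi|^2)^{-1}), i.e. the fundamental
   solution of (1 - Delta) on R^n, written via its subordination formula
   B(x) = int_0^oo (4 pi s)^{-n/2} e^{-|x|^2/(4s)} e^{-s} ds  (in \bar R). *)
Definition Bessel (n : nat) (x : 'rV[R]_n) : \bar R :=
  \int[(@lebesgue_measure R)]_(s in `]0%R, +oo[)
     ((powR (4 * pi * s) (- (n%:R / 2))) *
      expR (- (enorm x ^+ 2 / (4 * s))) * expR (- s))%:E%E.

Definition Bop (n : nat) (phi : 'rV[R]_n -> R) (x : 'rV[R]_n) : \bar R :=
  intRn (fun y => (Bessel (x - y) * (phi y)%:E)%E).

Definition BC (n : nat) (a : R) (phi : 'rV[R]_n -> R) : Prop :=
  continuous phi /\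
  exists C r : R, forall x, r <= enorm x -> `|phi x| <= C * powR (enorm x) a.

(* Z_{T,a} = C([0,T); BC_a), continuity in t w.r.t. the weighted sup norm
   sup_x |phi x| / (1+|x|)^a.  mu x t is the value at (x,t). *)
Definition Zspace (n : nat) (T : \bar R) (a : R) (mu : 'rV[R]_n -> R -> R) : Prop :=
  (forall t, 0 <= t -> (t%:E < T)%E -> BC a (fun x => mu x t)) /\
  (forall t1, 0 <= t1 -> (t1%:E < T)%E -> forall e, 0 < e ->
     exists d, 0 < d /\ forall t, 0 <= t -> (t%:E < T)%E -> `|t - t1| < d ->
       forall x, `|mu x t - mu x t1| <= e * powR (1 + enorm x) a).

Definition lintI (t : R) (g : R -> \bar R) : \bar R :=
  (\int[@lebesgue_measure R]_(tau in `[0%R, t]) g tau)%E.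

Definition intB (n : nat) (mu : 'rV[R]_n -> R -> R) (x : 'rV[R]_n) (t : R) : \bar R :=
  lintI t (fun tau => Bop (fun y => mu y tau) x).

Definition intBV (n : nat) (p : R) (V : 'rV[R]_n -> R) (mu : 'rV[R]_n -> R -> R)
  (x : 'rV[R]_n) (t : R) : \bar R :=
  lintI t (fun tau =>
     ((expR ((1 - p) * tau))%:E * Bop (fun y => (V y * powR (mu y tau) p)%R) x)%E).

Definition s_supersolution (n : nat) (T : \bar R) (a p : R) (V : 'rV[R]_n -> R)
  (u0 : 'rV[R]_n -> R) (u : 'rV[R]_n -> R -> R) : Prop :=
  let mu := fun x t => expR t * u x t in
  Zspace T a mu /\
  forall x t, 0 <= t -> (t%:E < T)%E ->
    ((u0 x)%:E + intB mu x t + intBV p V mu x t <= (mu x t)%:E)%E.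

End Defs.

(* Main.v *)
Require Import Defs.
From HB Require Import structures.
From mathcomp Require Import all_boot all_order all_algebra.
From mathcomp Require Import all_classical all_reals all_analysis.
From mathcomp Require Import ring lra.
Import Order.TTheory GRing.Theory Num.Theory.
Import numFieldNormedType.Exports.
Local Open Scope classical_set_scope.
Local Open Scope ring_scope.

Section H.
Variable R : realType.
Local Notation leb := (@lebesgue_measure R).

Lemma int_mono (D1 D2 : set R) (f g : R -> \bar R) :
  (forall x, D1 x -> 0 <= f x)%E -> (forall x, D2 x -> 0 <= g x)%E ->
  (forall x, D1 x -> D2 x /\ (f x <= g x)%E) ->
  (\int[leb]_(x in D1) f x <= \int[leb]_(x in D2) g x)%E.
Proof.
move=> f0 g0 fg; rewrite ge0_integralE; last exact: f0.
rewrite ge0_integralE; last exact: g0.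
apply: le_ereal_sup => _ [h /= hf <-]; exists h => //= x.
apply: (le_trans (hf x)); rewrite /patch.
have [xD1|xD1] := boolP (x \in D1).
  have [D2x fgx] := fg x (set_mem xD1); by rewrite ifT ?inE.
case: ifPn => [/set_mem /g0 //|_]; exact: lexx.
Qed.
Lemma int_lb (D : set R) (g : R -> \bar R) a b c : a < b -> 0 <= c ->
  (forall s, a <= s <= b -> D s) -> (forall s, D s -> 0 <= g s)%E ->
  (forall s, a <= s <= b -> (c%:E <= g s)%E) ->
  ((c * (b - a))%:E <= \int[leb]_(s in D) g s)%E.
Proof.
move=> ab c0 sD g0 cg.
apply: (@le_trans _ _ (\int[leb]_(s in `[a, b]) (cst c%:E s))%E).
  rewrite integral_cst; last exact: measurable_itv.
  have := lebesgue_measure_itv `[a, b]. rewrite /= lte_fin ab => H.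
  by rewrite H -EFinD -EFinM.
apply: (@int_mono `[a, b]%classic D (cst c%:E) g) => //.
move=> x; rewrite /= in_itv /= => /andP[ax xb]; split; first by apply: sD; rewrite ax.
by apply: cg; rewrite ax.
Qed.
Lemma intRn_ge0 m (f : 'rV[R]_m -> \bar R) :
  (forall y, 0 <= f y)%E -> (0 <= intRn f)%E.
Proof.
elim: m f => [|m IH] f f0 /=; first exact: f0.
rewrite /lint; apply: integral_ge0 => s _; apply: IH => y; exact: f0.
Qed.

Lemma intRn_mono m (f g : 'rV[R]_m -> \bar R) :
  (forall y, 0 <= f y)%E -> (forall y, f y <= g y)%E -> (intRn f <= intRn g)%E.
Proof.
elim: m f g => [|m IH] f g f0 fg /=; first exact: fg.
rewrite /lint; apply: int_mono.
- by move=> s _; apply: intRn_ge0.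
- by move=> s _; apply: intRn_ge0 => y; apply: le_trans (fg _); exact: f0.
- by move=> s _; split => //; apply: IH.
Qed.

Lemma intRn_lb m (f : 'rV[R]_m -> \bar R) (cen : nat -> R) r c :
  0 < r -> 0 <= c -> (forall y, 0 <= f y)%E ->
  (forall y : 'rV[R]_m, (forall j : 'I_m, `|cen j - y ord0 j| < r) -> (c%:E <= f y)%E) ->
  ((c * r ^+ m)%:E <= intRn f)%E.
Proof.
elim: m f cen => [|m IH] f cen r0 c0 f0 fc /=.
  by rewrite expr0 mulr1; apply: fc => -[].
rewrite /lint.
have -> : c * r ^+ m.+1 = (c * r ^+ m) * ((cen 0%N + r / 2) - (cen 0%N - r / 2)).
  by rewrite exprS; field.
apply: (@int_lb setT _ (cen 0%N - r / 2) (cen 0%N + r / 2) (c * r ^+ m)) => //.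
- by rewrite ltrBlDr -addrA ltrDl -splitr.
- by rewrite mulr_ge0 // exprn_ge0 // ltW.
- by move=> s _; apply: intRn_ge0.
move=> s /andP[s1 s2]; apply: (IH _ (fun k => cen k.+1)) => //.
move=> y hy; apply: fc => j; rewrite mxE; case: splitP => k hk.
  have k0 : k = ord0 by apply/val_inj; case: (k) => -[].
  rewrite mxE k0 /= in hk *; rewrite hk.
  by rewrite ltr_distlC; apply/andP; split; lra.
by rewrite hk; exact: hy.
Qed.
Lemma Bessel_ge0 m (z : 'rV[R]_m) : (0 <= Bessel z)%E.
Proof.
rewrite /Bessel; apply: integral_ge0 => s _; rewrite lee_fin.
by rewrite !mulr_ge0 // ?powR_ge0 // expR_ge0.
Qed.

Lemma Bop_ge0 m (phi : 'rV[R]_m -> R) x :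
  (forall y, 0 <= phi y) -> (0 <= Bop phi x)%E.
Proof.
move=> p0; rewrite /Bop; apply: intRn_ge0 => y.
by apply: mule_ge0; [exact: Bessel_ge0|rewrite lee_fin].
Qed.

Lemma Bop_mono m (phi psi : 'rV[R]_m -> R) x :
  (forall y, 0 <= phi y) -> (forall y, phi y <= psi y) -> (Bop phi x <= Bop psi x)%E.
Proof.
move=> p0 pp; rewrite /Bop; apply: intRn_mono => y.
  by apply: mule_ge0; [exact: Bessel_ge0|rewrite lee_fin].
by apply: lee_pmul => //; [exact: Bessel_ge0|rewrite lee_fin|rewrite lee_fin].
Qed.
Lemma stepA m (z : 'rV[R]_m) L K : 0 <= L -> 0 <= K ->
  enorm z ^+ 2 <= L ^+ 2 + K ->
  ((powR (4 * pi * (L / 2 + 1 + 1)) (- (m%:R / 2)) * expR (- (L / 2 + K / 4))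
     * expR (- (L / 2 + 1 + 1)))%:E <= Bessel z)%E.
Proof.
move=> L0 K0 hz; rewrite /Bessel.
have pi0 := pi_gt0 R.
set c := (powR (4 * pi * (L / 2 + 1 + 1)) (- (m%:R / 2)) * expR (- (L / 2 + K / 4))
     * expR (- (L / 2 + 1 + 1))).
apply: (@le_trans _ _ ((c * (L / 2 + 1 + 1 - (L / 2 + 1)))%:E)).
  have -> : L / 2 + 1 + 1 - (L / 2 + 1) = 1 by ring.
  by rewrite mulr1.
apply: (@int_lb `]0%R, +oo[%classic).
- lra.
- by rewrite !mulr_ge0 ?powR_ge0 ?expR_ge0.
- by move=> s /andP[s1 _]; rewrite /= in_itv /= andbT; lra.
- by move=> s _; rewrite lee_fin !mulr_ge0 ?powR_ge0 ?expR_ge0.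
move=> s /andP[s1 s2]; rewrite lee_fin.
have s0 : 0 < s by lra.
apply: ler_pM; first by rewrite mulr_ge0 ?powR_ge0 ?expR_ge0.
- exact: expR_ge0.
- apply: ler_pM; [exact: powR_ge0|exact: expR_ge0| |].
  + rewrite !powRN lef_pV2 ?posrE ?powR_gt0 //; last 2 first.
      nra.
      nra.
    apply: ge0_ler_powR => //.
    * rewrite nnegrE; nra.
    * rewrite nnegrE; nra.
    * nra.
  + rewrite ler_expR lerN2 ler_pdivrMr; last by rewrite mulr_gt0 //; lra.
    have h1 : 0 <= L * (s - (L / 2 + 1)) by rewrite mulr_ge0 //; lra.
    have h2 : 0 <= K * (s - 1) by rewrite mulr_ge0 //; lra.
    nra.
- rewrite ler_expR lerN2; lra.
Qed.
Lemma stepB m (q K eps rho : R) : (1 <= m)%N -> 0 < q -> 0 <= K -> 0 < eps -> 0 <= rho ->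
  ((8 * pi + 2 * pi * q * m%:R / eps) ^+ m)^-1 * expR (- (K / 4 + 2))
    * expR (- ((q + eps) * rho)) <=
  powR (4 * pi * (q * rho / 2 + 1 + 1)) (- (m%:R / 2)) * expR (- (q * rho / 2 + K / 4))
     * expR (- (q * rho / 2 + 1 + 1)).
Proof.
move=> hm q0 K0 e0 r0.
have pi2 := pi_ge2 R.
have m1 : 1 <= m%:R :> R by rewrite ler1n.
set M := 8 * pi + 2 * pi * q * m%:R / eps.
set y := 4 * pi * (q * rho / 2 + 1 + 1).
have qr : 0 <= q * rho by rewrite mulr_ge0 // ltW.
have y1 : 1 <= y by rewrite /y; nra.
have M0 : 0 < M.
  rewrite /M; have : 0 <= 2 * pi * q * m%:R / eps.
    by rewrite divr_ge0 ?ltW // !mulr_gt0 //; lra.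
  lra.
set w := eps * rho / m%:R.
have w0 : 0 <= w by rewrite /w divr_ge0 ?mulr_ge0 //; lra.
have Mw : M * w = 8 * pi * w + 2 * pi * q * rho.
  rewrite /M /w; field; apply/andP; split; rewrite gt_eqF //; lra.
have hpow : powR y (m%:R / 2) <= M ^+ m * expR (eps * rho).
  apply: (@le_trans _ _ (powR y m%:R)); first by apply: ler_powR => //; lra.
  rewrite powR_mulrn; last lra.
  have yM : y <= M * (1 + w).
    rewrite mulrDr mulr1 Mw /y /M.
    have : 0 <= 2 * pi * q * m%:R / eps.
      by rewrite divr_ge0 ?ltW // !mulr_gt0 //; lra.
    nra.
  apply: (@le_trans _ _ ((M * (1 + w)) ^+ m)).
    by apply: lerXn2r => //; rewrite nnegrE; [lra|nra].
  rewrite exprMn; apply: ler_wpM2l; first by rewrite exprn_ge0 // ltW.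
  have -> : eps * rho = m%:R * w by rewrite /w; field; rewrite gt_eqF //; lra.
  rewrite expRM_natl; apply: lerXn2r; rewrite ?nnegrE ?expR_ge0 //; first lra.
  exact: expR_ge1Dx.
set E := expR (- (q * rho / 2 + K / 4)) * expR (- (q * rho / 2 + 1 + 1)).
have eL : expR (- (K / 4 + 2)) * expR (- ((q + eps) * rho)) = expR (- (eps * rho)) * E.
  by rewrite /E -!expRD; congr expR; field.
rewrite -mulrA eL mulrA -[in leRHS]mulrA -/E.
apply: ler_wpM2r; first by rewrite /E mulr_ge0 // expR_ge0.
rewrite powRN expRN -invfM lef_pV2 ?posrE ?powR_gt0 //; last 2 first.
- by rewrite mulr_gt0 ?expR_gt0 // exprn_gt0.
- lra.
Qed.
Lemma enorm_sqr m (v : 'rV[R]_m) : enorm v ^+ 2 = \sum_(i < m) v ord0 i ^+ 2.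
Proof. by rewrite /enorm sqr_sqrtr // sumr_ge0 // => i _; exact: sqr_ge0. Qed.

Lemma enorm_ge0 m (v : 'rV[R]_m) : 0 <= enorm v.
Proof. exact: sqrtr_ge0. Qed.

Lemma dist_bound m (x y : 'rV[R]_m) (cen : nat -> R) r eta : 0 < eta ->
  (forall j : 'I_m, `|cen j - y ord0 j| < r) ->
  enorm (x - y) ^+ 2 <= (1 + eta) * enorm x ^+ 2
     + (1 + eta^-1) * \sum_(i < m) (`|cen i| + r) ^+ 2.
Proof.
move=> e0 hy; rewrite !enorm_sqr !mulr_sumr -big_split /=; apply: ler_sum => i _.
rewrite !mxE.
set a := x ord0 i; set b := y ord0 i.
have hb : b ^+ 2 <= (`|cen i| + r) ^+ 2.
  rewrite -real_normK ?num_real //; apply: lerXn2r; rewrite ?nnegrE //.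
    by apply: addr_ge0 => //; apply: le_trans (ltW (hy i)).
  apply: (le_trans (y := `|cen i| + `|cen i - b|)); last by rewrite lerD2l ltW.
  by rewrite -[X in `|X|](subKr (cen i)) ler_normB.
have h : (1 + eta) * a ^+ 2 + (1 + eta^-1) * b ^+ 2 - (a - b) ^+ 2 = (eta * a + b) ^+ 2 / eta.
  by field; rewrite gt_eqF.
have h1 : 0 <= (eta * a + b) ^+ 2 / eta by rewrite divr_ge0 ?sqr_ge0 // ltW.
have h2 : (1 + eta^-1) * b ^+ 2 <= (1 + eta^-1) * (`|cen i| + r) ^+ 2.
  by rewrite ler_wpM2l // addr_ge0 // invr_ge0 ltW.
lra.
Qed.
End H.

Theorem mainTheorem13 (R : realType) (n : nat) (u0 : 'rV[R]_n -> R) :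
  (1 <= n)%N -> continuous u0 -> (forall x, 0 <= u0 x) -> (exists x, u0 x != 0) ->
  forall delta t0 : R, 1 < delta -> 0 < t0 ->
  exists C0 : R, 0 < C0 /\
  (forall (T : \bar R) (a : R) (mu : 'rV[R]_n -> R -> R),
     (t0%:E < T)%E -> Zspace T a mu ->
     (forall x t, 0 <= t -> (t%:E < T)%E -> 0 <= mu x t) ->
     (forall x t, 0 <= t -> (t%:E < T)%E -> ((u0 x)%:E + intB mu x t <= (mu x t)%:E)%E) ->
     forall x, ((C0 * expR (- (delta * enorm x)))%:E <= intB mu x t0)%E) /\
  (forall (T : \bar R) (a p : R) (V : 'rV[R]_n -> R) (u : 'rV[R]_n -> R -> R),
     (t0%:E < T)%E -> 0 < p < 1 -> continuous V -> (forall x, 0 <= V x) ->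
     (forall x t, 0 <= t -> (t%:E < T)%E -> 0 <= u x t) ->
     s_supersolution T a p V u0 u ->
     let mu := fun x t => expR t * u x t in
     forall x,
       ((u0 x)%:E + intB mu x t0 + intBV p V mu x t0 <= (mu x t0)%:E)%E /\
       ((C0 * expR (- (delta * enorm x)))%:E <= (u0 x)%:E + intB mu x t0 + intBV p V mu x t0)%E).
Proof.
case: n u0 => [|n] u0 // _ cu0 u00 [x1 hx1] delta t0 hd ht0.
have u1 : 0 < u0 x1 by rewrite lt_def hx1 u00.
set eps0 := u0 x1 / 2.
have e00 : 0 < eps0 by rewrite /eps0; lra.
have [r r0 hr] : exists2 r : R, 0 < r & forall y, ball x1 r y -> eps0 <= u0 y.
  have := cu0 x1; move/cvgrPdist_lt => /(_ eps0 e00) /nbhs_ballP [r r0 H].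
  exists r => // y /H /=; rewrite ltr_distlC => /andP[h1 _]; rewrite /eps0 in h1 *; lra.
set cen := fun k : nat => x1 ord0 (inord k).
have hbox : forall y : 'rV[R]_n.+1, (forall j : 'I_n.+1, `|cen j - y ord0 j| < r) -> eps0 <= u0 y.
  move=> y hy; apply: hr; split => // i j.
  have -> : i = ord0 by apply/val_inj; case: i => -[].
  by have := hy j; rewrite /cen inord_val.
set q := (1 + delta) / 2.
set eps := (delta - 1) / 2.
set eta := q ^+ 2 - 1.
have q0 : 0 < q by rewrite /q; lra.
have ep0 : 0 < eps by rewrite /eps; lra.
have q1 : 1 < q by rewrite /q; lra.
have eta0 : 0 < eta by rewrite /eta; nra.
set K := (1 + eta^-1) * \sum_(i < n.+1) (`|cen i| + r) ^+ 2.
have K0 : 0 <= K.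
  rewrite /K mulr_ge0 //; first by rewrite addr_ge0 // invr_ge0 ltW.
  by rewrite sumr_ge0 // => i _; exact: sqr_ge0.
set M := 8 * pi + 2 * pi * q * n.+1%:R / eps.
set kappa := (M ^+ n.+1)^-1 * expR (- (K / 4 + 2)).
have M0 : 0 < M.
  have pi2 := pi_ge2 R.
  rewrite /M; have : 0 <= 2 * pi * q * n.+1%:R / eps.
    by rewrite divr_ge0 ?ltW // !mulr_gt0 //; lra.
  lra.
have ka0 : 0 < kappa by rewrite /kappa mulr_gt0 ?expR_gt0 // invr_gt0 exprn_gt0.
have hB : forall x : 'rV[R]_n.+1,
    ((kappa * expR (- (delta * enorm x)) * eps0 * r ^+ n.+1)%:E <= Bop u0 x)%E.
  move=> x; rewrite /Bop; apply: (@intRn_lb R n.+1 _ cen r) => //.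
  - by apply: mulr_ge0; [apply: mulr_ge0; [exact: ltW|exact: expR_ge0]|exact: ltW].
  - by move=> y; apply: mule_ge0; [exact: Bessel_ge0|rewrite lee_fin].
  move=> y hy; rewrite EFinM; apply: lee_pmul.
  - by rewrite lee_fin; apply: mulr_ge0; [exact: ltW|exact: expR_ge0].
  - by rewrite lee_fin ltW.
  - have hz : enorm (x - y) ^+ 2 <= (q * enorm x) ^+ 2 + K.
      apply: le_trans (@dist_bound R n.+1 x y cen r eta eta0 hy) _.
      have -> : 1 + eta = q ^+ 2 by rewrite /eta; ring.
      by rewrite [in leRHS]exprMn.
    apply: le_trans; last exact: (@stepA R n.+1 (x - y) _ K (mulr_ge0 (ltW q0) (@enorm_ge0 R _ x)) K0 hz).
    rewrite lee_fin.
    have := @stepB R n.+1 q K eps (enorm x) (ltn0Sn n) q0 K0 ep0 (@enorm_ge0 R _ x).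
    by rewrite -/M -/kappa (_ : q + eps = delta) //; rewrite /q /eps; field.
  - by rewrite lee_fin hbox.
set C0 := t0 * (kappa * eps0 * r ^+ n.+1).
have C00 : 0 < C0.
  by apply: mulr_gt0 => //; apply: mulr_gt0; [exact: mulr_gt0|exact: exprn_gt0].
have P1 : forall (T : \bar R) (mu : 'rV[R]_n.+1 -> R -> R),
     (t0%:E < T)%E ->
     (forall x t, 0 <= t -> (t%:E < T)%E -> 0 <= mu x t) ->
     (forall x t, 0 <= t -> (t%:E < T)%E -> ((u0 x)%:E + intB mu x t <= (mu x t)%:E)%E) ->
     forall x, ((C0 * expR (- (delta * enorm x)))%:E <= intB mu x t0)%E.
  move=> T mu hT hmu hsup x.
  have hlt : forall s, s <= t0 -> (s%:E < T)%E.
    by move=> s hs; apply: le_lt_trans hT; rewrite lee_fin.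
  have iB0 : forall y s, 0 <= s -> s <= t0 -> (0 <= intB mu y s)%E.
    move=> y s s0 st; rewrite /intB /lintI; apply: integral_ge0 => tau.
    rewrite /= in_itv /= => /andP[t1 t2]; apply: Bop_ge0 => z; apply: hmu => //.
    by apply: hlt; apply: le_trans st.
  have hu : forall y s, 0 <= s -> s <= t0 -> u0 y <= mu y s.
    move=> y s s0 st; rewrite -lee_fin; apply: le_trans (hsup y s s0 (hlt s st)).
    exact: leeDl (iB0 y s s0 st).
  rewrite /intB /lintI.
  have -> : C0 * expR (- (delta * enorm x)) =
      (kappa * expR (- (delta * enorm x)) * eps0 * r ^+ n.+1) * (t0 - 0).
    by rewrite subr0 /C0; ring.
  apply: (@int_lb R `[0, t0]%classic _ 0 t0 (kappa * expR (- (delta * enorm x)) * eps0 * r ^+ n.+1)) => //.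
  - apply: mulr_ge0; last by rewrite exprn_ge0 // ltW.
    by apply: mulr_ge0; [apply: mulr_ge0; [exact: ltW|exact: expR_ge0]|exact: ltW].
  - move=> s; rewrite /= in_itv /= => /andP[s0 s1]; apply: Bop_ge0 => z.
    exact: hmu (hlt s s1).
  - move=> s /andP[s0 s1]; apply: le_trans (hB x) _; apply: Bop_mono => // y.
    exact: hu.
exists C0; split => //; split.
  by move=> T a mu hT _; exact: P1.
move=> T a p V u hT hp cV V0 hu0 [hZ hsup] mu x.
have hmu0 : forall x t, 0 <= t -> (t%:E < T)%E -> 0 <= mu x t.
  by move=> y t t0' tT; rewrite /mu mulr_ge0 ?expR_ge0 ?hu0.
have iBV0 : forall y t, (0 <= intBV p V mu y t)%E.
  move=> y t; rewrite /intBV /lintI; apply: integral_ge0 => tau _.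
  apply: mule_ge0; first by rewrite lee_fin expR_ge0.
  by apply: Bop_ge0 => z; rewrite mulr_ge0 ?powR_ge0.
have hsup' : forall x t, 0 <= t -> (t%:E < T)%E ->
    ((u0 x)%:E + intB mu x t <= (mu x t)%:E)%E.
  move=> y t t0' tT; apply: le_trans (hsup y t t0' tT); exact: leeDl.
split; first exact: hsup (ltW ht0) hT.
apply: le_trans (P1 T mu hT hmu0 hsup' x) _.
apply: le_trans (leeDl _ (iBV0 x t0)).
apply: leeDr; rewrite lee_fin; exact: u00.
Qed.
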